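(* Let $u$ be a one-sided Sturmian sequence with left special sequence $l=l_1l_2\dots$. Let $xl_1l_2\dots l_{n-1}$ and $wl_1\dots l_{m-1}$ with $1\le m<n$ and $x,w\in\{0,1\}$ be consecutive right special significant blocks of $\tilde X_u$, and let $y\in\{0,1\}$ with $y\neq l_n$. Then $\mathrm{sig}(xl_1l_2\dots l_{n-1}y)=\mathrm{sig}(wl_1\dots l_{m-1}y)$.
   Context: A sequence $u\in\{0,1\}^{\mathbb N}$ is Sturmian if for every $n\ge1$ exactly $n+1$ distinct blocks of length $n$ occur in $u$. $X_u^+$ is the closure of $\{\sigma^n u:n\in\mathbb N\}$, $\sigma$ the shift $(\sigma x)_i=x_{i+1}$, and $\tilde X_u=\{x\in\{0,1\}^{\mathbb Z}: x_px_{p+1}\dots\in X_u^+\ \forall p\}$; the languages of $u$, $X_u^+$, $\tilde X_u$ coincide. For each $n$ there is a unique block $L_n$ of length $n$ with $0L_n$ and $1L_n$ in the language; these are the prefixes $L_n=l_1\dots l_n$ of the left special sequence $l$. A block $v$ is right special if both $v0$ and $v1$ are in the language; the right special block of length $n$ is $l_nl_{n-1}\dots l_1$. For a block $a_{-n}\dots a_0$ in the language, $\mathrm{fol}(a_{-n}\dots a_0)=\{b_0b_1\dots\in X_u^+:\exists b\in\tilde X_u,\ b_{-n}\dots b_0=a_{-n}\dots a_0\}$. A block $a_{-n}\dots a_0$ ($n\ge1$) is significant if $\mathrm{fol}(a_{-n}\dots a_0)\subsetneq\mathrm{fol}(a_{-n+1}\dots a_0)$; $0$ and $1$ are also significant.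 $\mathrm{sig}(\cdot)$ is the longest significant suffix. For $m=1$ the block $wl_1\dots l_{m-1}$ is the single symbol $w$. The two blocks being consecutive means both are right special significant blocks and there is no right special significant block of length strictly between $m$ and $n$. *)

(* Defs.v *)
From mathcomp Require Import all_boot.
From Stdlib Require Import ZArith ClassicalEpsilon.

Set Implicit Arguments.
Unset Strict Implicit.
Unset Printing Implicit Defensive.

(* One-sided sequences u : nat -> bool, with u i = u_(i+1) (0-based storage).
   Blocks are finite words [seq bool]. *)

Definition blk (x : nat -> bool) (i k : nat) : seq bool := mkseq (fun j => x (i + j)) k.

Definition in_lang (u : nat -> bool) (v : seq bool) : Prop :=
  exists i, blk u i (size v) = v.

Definition sturmian (u : nat -> bool) : Prop :=
  forall n, 1 <= n ->
    exists s : seq (seq bool), uniq s /\ size s = n.+1 /\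
      forall v, (size v = n /\ in_lang u v) <-> v \in s.

(* X_u^+ : closure of the shift orbit of u in {0,1}^N (product topology):
   exactly the sequences all of whose prefixes (finite cylinders) meet the orbit *)
Definition inXp (u : nat -> bool) (x : nat -> bool) : Prop :=
  forall k, in_lang u (blk x 0 k).

(* \tilde X_u : two-sided sequences all of whose right tails lie in X_u^+ *)
Definition inXt (u : nat -> bool) (b : Z -> bool) : Prop :=
  forall p : Z, inXp u (fun i : nat => b (p + Z.of_nat i)%Z).

(* fol(a_{-n} ... a_0), where a = [:: a_{-n}; ...; a_0], n = size a - 1:
   right halves b_0 b_1 ... of points b of \tilde X_u with b_{-n..0} = a *)
Definition fol (u : nat -> bool) (a : seq bool) : (nat -> bool) -> Prop :=
  fun c => inXp u c /\
    exists b : Z -> bool, inXt u b /\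
      (forall j, j < size a -> b (Z.of_nat j - Z.of_nat (size a).-1)%Z = nth false a j) /\
      (forall i : nat, c i = b (Z.of_nat i)).

Definition significant (u : nat -> bool) (a : seq bool) : Prop :=
  size a = 1 \/
  (2 <= size a /\
   (forall c, fol u a c -> fol u (behead a) c) /\
   (exists c, fol u (behead a) c /\ ~ fol u a c)).

Definition is_sig (u : nat -> bool) (v s : seq bool) : Prop :=
  suffix s v /\ significant u s /\
  forall t, suffix t v -> significant u t -> size t <= size s.

Definition sig (u : nat -> bool) (v : seq bool) : seq bool :=
  epsilon (inhabits [::]) (is_sig u v).

Definition right_special (u : nat -> bool) (v : seq bool) : Prop :=
  in_lang u (rcons v false) /\ in_lang u (rcons v true).

(* l : nat -> bool is the left special sequence, l i = l_(i+1):
   every prefix L_n = l_1 ... l_n is left special *)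
Definition left_special_seq (u l : nat -> bool) : Prop :=
  forall n, in_lang u (false :: blk l 0 n) /\ in_lang u (true :: blk l 0 n).

Definition rs_significant (u : nat -> bool) (v : seq bool) : Prop :=
  right_special u v /\ significant u v.

Definition consecutive_rss (u : nat -> bool) (v1 v2 : seq bool) : Prop :=
  rs_significant u v1 /\ rs_significant u v2 /\
  forall v, size v2 < size v < size v1 -> ~ rs_significant u v.

(* Main.v *)
Require Import Defs.
From Stdlib Require Import ZArith Lia ClassicalEpsilon FunctionalExtensionality PropExtensionality.
From mathcomp Require Import all_boot zify.
Set Implicit Arguments. Unset Strict Implicit.

Lemma blkP (x : nat -> bool) i k v :
  blk x i k = v <-> size v = k /\ forall j, j < k -> x (i + j) = nth false v j.
Proof.
split.
- move=> <-; rewrite /blk size_mkseq; split=> // j hj; by rewrite nth_mkseq.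
- move=> [hs hn]; apply: (@eq_from_nth _ false); rewrite /blk size_mkseq ?hs //.
  move=> j hj; rewrite nth_mkseq // hn //.
Qed.

Lemma in_lang_drop u v k : in_lang u v -> in_lang u (drop k v).
Proof.
move=> [i /blkP [hs hn]]; exists (i + k); apply/blkP; split=> // j hj.
rewrite nth_drop -addnA hn //; rewrite size_drop in hj; lia.
Qed.

Lemma in_lang_take u v k : in_lang u v -> in_lang u (take k v).
Proof.
move=> [i /blkP [hs hn]]; exists i; apply/blkP; split=> // j hj.
rewrite size_take in hj.
have hjk : j < k by move: hj; case: (ltnP k (size v)) => hh /=; lia.
have hjs : j < size v by move: hj; case: (ltnP k (size v)) => hh /=; lia.
rewrite nth_take // hn //; lia.
Qed.

Lemma in_lang_rcons u v a : in_lang u (rcons v a) -> in_lang u v.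
Proof.
move=> h; have := in_lang_take (size v) h.
by rewrite -cats1 take_size_cat.
Qed.

Lemma in_lang_ext u v : in_lang u v -> in_lang u (rcons v false) \/ in_lang u (rcons v true).
Proof.
move=> [i /blkP [hs hn]].
have h : in_lang u (rcons v (u (i + size v))).
  exists i; apply/blkP; rewrite size_rcons; split=> // j hj.
  rewrite nth_rcons; case: ltnP => hj'; first by rewrite hn.
  have -> : j = size v by lia.
  by rewrite eqxx.
by case: (u (i + size v)) h; [right|left].
Qed.

Lemma blkS (x : nat -> bool) i k : blk x i k.+1 = rcons (blk x i k) (x (i + k)).
Proof.
apply/blkP; rewrite size_rcons /blk size_mkseq; split=> // j hj.
rewrite nth_rcons size_mkseq; case: ltnP => hj'; first by rewrite nth_mkseq.
have -> : j = k by lia.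
by rewrite eqxx.
Qed.

Lemma rs_drop u v k : right_special u v -> right_special u (drop k v).
Proof.
move=> [h0 h1]; split.
- case: (leqP k (size v)) => hk.
  + by rewrite -drop_rcons //; apply: in_lang_drop.
  + rewrite drop_oversize; last lia.
    have := in_lang_drop (size v) h0; rewrite drop_rcons // drop_size //.
- case: (leqP k (size v)) => hk.
  + by rewrite -drop_rcons //; apply: in_lang_drop.
  + rewrite drop_oversize; last lia.
    have := in_lang_drop (size v) h1; rewrite drop_rcons // drop_size //.
Qed.

Definition ext (u : nat -> bool) (v : seq bool) : bool :=
  if excluded_middle_informative (in_lang u (rcons v false)) then false else true.

Lemma extP u v : in_lang u v -> in_lang u (rcons v (ext u v)).
Proof.
rewrite /ext; case: excluded_middle_informative => // h hv.
by case: (in_lang_ext hv).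
Qed.

Lemma rs_unique u k v1 v2 : sturmian u -> right_special u v1 -> right_special u v2 ->
  size v1 = k -> size v2 = k -> v1 = v2.
Proof.
move=> hst [a1 b1] [a2 b2] s1 s2.
case: k s1 s2 => [|k] s1 s2.
  by move/size0nil: s1 => ->; move/size0nil: s2 => ->.
apply: Classical_Prop.NNPP => hne.
have [s [us [ss hs]]] := hst k.+1 isT.
have [s' [us' [ss' hs']]] := hst k.+2 isT.
set f := fun v => rcons v (ext u v).
have finj : injective f.
  by move=> p q /rcons_inj [].
set L := [seq f v | v <- s] ++ [:: rcons v1 (~~ ext u v1); rcons v2 (~~ ext u v2)].
have uL : uniq L.
  rewrite cat_uniq (map_inj_uniq finj) us /=.
  have ne12 : rcons v1 (~~ ext u v1) != rcons v2 (~~ ext u v2).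
    by apply/eqP => /rcons_inj [].
  have n1 : rcons v1 (~~ ext u v1) \notin [seq f v | v <- s].
    apply/negP => /mapP [v _ /rcons_inj [e1 e2]]; subst v.
    by move: e2; case: (ext u v1).
  have n2 : rcons v2 (~~ ext u v2) \notin [seq f v | v <- s].
    apply/negP => /mapP [v _ /rcons_inj [e1 e2]]; subst v.
    by move: e2; case: (ext u v2).
  by rewrite /= !inE negb_or ne12 n1 /= orbF n2.
have sL : {subset L <= s'}.
  move=> z; rewrite mem_cat => /orP [/mapP [v hv ->]|].
  - have [hsz hl] := proj2 (hs v) hv.
    apply/hs'; rewrite /f size_rcons hsz; split=> //; exact: extP.
  - rewrite !inE => /orP [/eqP ->|/eqP ->].
    + apply/hs'; rewrite size_rcons s1; split=> //; by case: (~~ ext u v1).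
    + apply/hs'; rewrite size_rcons s2; split=> //; by case: (~~ ext u v2).
have := uniq_leq_size uL sL.
by rewrite size_cat size_map ss ss' /=; lia.
Qed.

Lemma inXp_ext u (f g : nat -> bool) : (forall i, f i = g i) -> inXp u f -> inXp u g.
Proof.
move=> e h k; have -> : blk g 0 k = blk f 0 k by apply: eq_mkseq => i; rewrite e.
exact: h.
Qed.

Lemma inXt_shift u (b : Z -> bool) d : inXt u b -> inXt u (fun p => b (p + d)%Z).
Proof.
move=> h p; apply: (inXp_ext _ (h (p + d)%Z)) => i /=; f_equal; lia.
Qed.

Lemma fol_behead u a c : 2 <= size a -> fol u a c -> fol u (behead a) c.
Proof.
case: a => [|a0 [|a1 a]] //= _ [hc [b [hb [hbl hcb]]]].
split=> //; exists b; split=> //; split=> // j hj.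
have := hbl j.+1 hj => /=.
have -> : (Z.of_nat j - Z.of_nat (size a) = Z.of_nat j.+1 - Z.of_nat (size a).+1)%Z by lia.
by move=> ->.
Qed.

Lemma sig_rcons u r y : 2 <= size r -> significant u (rcons r y) -> significant u r.
Proof.
move=> hr [|[_ [_ [c [hc hnc]]]]].
  by rewrite size_rcons => [[h]]; move: hr; rewrite h.
right; split=> //; split; first by move=> c'; apply: fol_behead.
move: hr hc hnc; case: r => [|a0 r] //=.
case e: (size r) => [|s] // _.
move=> [hcp [b [hb [hbl hcb]]]] hnc.
rewrite size_rcons e /= in hbl.
exists (fun i => b (Z.of_nat i - 1)%Z); split.
- split.
  + have h0 := inXt_shift (-1)%Z hb 0%Z.
    apply: (inXp_ext _ h0) => i /=; f_equal; lia.
  + exists (fun p => b (p + -1)%Z); split; first exact: inXt_shift.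
    split; last by move=> i; f_equal; lia.
    move=> j; rewrite e /= => hj.
    have := hbl j (ltnW hj).
    have -> : (Z.of_nat j - Z.of_nat s.+1 = Z.of_nat j - Z.of_nat s + -1)%Z by lia.
    move=> ->; by rewrite nth_rcons e hj.
- move=> [_ [b2 [hb2 [hbl2 hcb2]]]]; apply: hnc.
  split=> //; exists (fun p => b2 (p + 1)%Z); split; first exact: inXt_shift.
  rewrite /= e in hbl2.
  split.
  + move=> j; rewrite -[size (a0 :: _)]/(size _).+1 size_rcons e succnK => hj.
    case: (ltnP j s.+2) => hj2.
    * have := hbl2 j hj2.
      have -> : (Z.of_nat j - Z.of_nat s.+1 = Z.of_nat j - Z.of_nat s.+2 + 1)%Z by lia.
      move=> ->; case: j hj hj2 => [|j] //= _ hj2.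
      by rewrite nth_rcons e; move: hj2; rewrite !ltnS => ->.
    * have ej : j = s.+2 by lia.
      subst j.
      have := hcb2 1.
      have -> : (Z.of_nat 1 - 1 = 0)%Z by lia.
      have -> : (Z.of_nat s.+2 - Z.of_nat s.+2 + 1 = Z.of_nat 1)%Z by lia.
      move=> <-.
      have := hbl s.+1 (ltnSn _).
      have -> : (Z.of_nat s.+1 - Z.of_nat s.+1 = 0)%Z by lia.
      move=> ->; by rewrite /= !nth_rcons e ltnn eqxx.
  + move=> i; rewrite hcb.
    have := hcb2 i.+1.
    have -> : (Z.of_nat i.+1 - 1 = Z.of_nat i)%Z by lia.
    move=> ->; f_equal; lia.
Qed.

Lemma A_not_sig u l N x y : sturmian u -> left_special_seq u l -> 1 <= N ->
  right_special u (x :: blk l 0 N) -> y != l N ->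
  ~ significant u (rcons (x :: blk l 0 N) y).
Proof.
set L := blk l 0 N.
have hsL : size L = N by rewrite /L /blk size_mkseq.
move=> hst hls hN hrs hy [h|[_ [_ [c [hc hnc]]]]].
  by move: h; rewrite size_rcons; case.
rewrite rcons_cons in hc hnc.
move: hc => [hcp [b [hb [hbl hcb]]]].
have K : forall j, j < N.+1 -> b (Z.of_nat j - Z.of_nat N)%Z = nth false (rcons L y) j.
  move=> j hj; have := hbl j; rewrite size_rcons succnK hsL => ->//.
have K2 : forall j, j < N.+2 -> b (Z.of_nat j - Z.of_nat N.+1)%Z =
    nth false (b (- Z.of_nat N.+1)%Z :: rcons L y) j.
  case=> [|j] hj.
    by have -> : (Z.of_nat 0 - Z.of_nat N.+1 = - Z.of_nat N.+1)%Z by lia.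
  have -> : (Z.of_nat j.+1 - Z.of_nat N.+1 = Z.of_nat j - Z.of_nat N)%Z by lia.
  by rewrite K.
case ex: (b (- Z.of_nat N.+1)%Z == x).
  apply: hnc; split=> //; exists b; split=> //; split=> // j.
  rewrite -[size (x :: _)]/(size _).+1 size_rcons succnK hsL => hj.
  by rewrite K2 // (eqP ex).
have hx : b (- Z.of_nat N.+1)%Z = ~~ x by move: ex; case: (b _); case: (x).
have l1 : in_lang u (rcons (~~ x :: L) y).
  have := hb (- Z.of_nat N.+1)%Z (N.+2).
  have -> : blk (fun i : nat => b (- Z.of_nat N.+1 + Z.of_nat i)%Z) 0 N.+2 = rcons (~~ x :: L) y.
    apply/blkP; rewrite size_rcons -[size (_ :: L)]/(size L).+1 hsL; split=> // j hj.
    rewrite rcons_cons -hx -K2 //; f_equal; lia.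
  by [].
have l2 : in_lang u (rcons (~~ x :: L) (l N)).
  have : in_lang u (~~ x :: blk l 0 N.+1) by case: (hls N.+1); case: (x).
  by rewrite blkS add0n.
have hrs2 : right_special u (~~ x :: L).
  by move: hy l1 l2; case: (y); case: (l N) => // _ l1 l2; split.
have := rs_unique hst hrs hrs2 (erefl _) (erefl _).
by move=> [e]; move: e; case: (x).
Qed.

Lemma suffix_short (t B A : seq bool) : suffix B A -> suffix t A -> size t <= size B -> suffix t B.
Proof.
move=> hBA htA hs.
have h1 := size_suffix hBA.
have h2 := size_suffix htA.
move: hBA htA; rewrite !suffixE => /eqP hB /eqP ht; apply/eqP.
rewrite -{2}hB drop_drop; rewrite -[RHS]ht; congr drop; clear hB ht; move: hs h1 h2; set a := size A; set b := size B; set c := size t; lia.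
Qed.

Lemma main u l N M x w y : sturmian u -> left_special_seq u l -> M < N ->
  consecutive_rss u (x :: blk l 0 N) (w :: blk l 0 M) -> y != l N ->
  sig u (rcons (x :: blk l 0 N) y) = sig u (rcons (w :: blk l 0 M) y).
Proof.
move=> hst hls hMN [[hVrs hVsig] [[hWrs hWsig] hbet]] hy.
set V := x :: blk l 0 N; set W := w :: blk l 0 M.
have hsV : size V = N.+1 by rewrite /V /= /blk size_mkseq.
have hsW : size W = M.+1 by rewrite /W /= /blk size_mkseq.
have hD : drop (N - M) V = W.
  apply: (rs_unique (k := M.+1) hst (rs_drop (N - M) hVrs) hWrs) => //.
  rewrite size_drop hsV; lia.
have hB : drop (N - M) (rcons V y) = rcons W y by rewrite drop_rcons ?hD // hsV; lia.
have hsuf : suffix (rcons W y) (rcons V y) by rewrite -hB suffix_drop.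
have C : forall t, suffix t (rcons V y) -> significant u t -> size t <= M.+2.
  move=> t ht hsig; rewrite leqNgt; apply/negP => hlt.
  have hsz := size_suffix ht; rewrite size_rcons hsV in hsz.
  move: ht; rewrite suffixE size_rcons hsV => /eqP ht.
  case: (ltnP (size t) N.+2) => hlt2.
  - rewrite drop_rcons in ht; last by rewrite hsV; lia.
    set r := drop (N.+2 - size t) V in ht.
    have hsr : size r = (size t).-1 by rewrite /r size_drop hsV; lia.
    have hr : significant u r by apply: (@sig_rcons u r y); [rewrite hsr; lia | rewrite ht].
    apply: (hbet r); first by rewrite hsr -/W -/V hsW hsV; apply/andP; split; lia.
    split=> //; exact: rs_drop.
  - have e : size t = N.+2 by lia.
    rewrite e subnn drop0 in ht.
    apply: (A_not_sig hst hls _ hVrs hy); first lia.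
    by rewrite -/V ht.
have E : is_sig u (rcons V y) = is_sig u (rcons W y).
  apply: functional_extensionality => s; apply: propositional_extensionality.
  split.
  - move=> [hs [hsig hmax]]; split.
      by apply: (suffix_short hsuf hs); rewrite size_rcons hsW; exact: C.
    split=> // t ht hts; apply: hmax => //; exact: (suffix_trans ht hsuf).
  - move=> [hs [hsig hmax]]; split; first exact: (suffix_trans hs hsuf).
    split=> // t ht hts; apply: hmax => //.
    by apply: (suffix_short hsuf ht); rewrite size_rcons hsW; exact: C.
by rewrite /sig E.
Qed.

Theorem lemma4p11 (u l : nat -> bool) (n m : nat) (x w y : bool) :
  sturmian u ->
  left_special_seq u l ->
  1 <= m < n ->
  consecutive_rss u (x :: blk l 0 n.-1) (w :: blk l 0 m.-1) ->
  y != l n.-1 ->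
  sig u (rcons (x :: blk l 0 n.-1) y) = sig u (rcons (w :: blk l 0 m.-1) y).
Proof.
move=> hst hls /andP [hm hmn].
case: n hmn => [|N] //; case: m hm => [|M] // _ hmn.
exact: main.
Qed.
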